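(* Consider the asynchronous best response dynamics $Z(t)$ described in the context, with an arbitrary distribution of the initial configuration $Z(0)$ on $[0,1]^n$. Then there exists a nonnegative random time $T$ with $\mathbb P(T<+\infty)=1$ such that $Z_i(t)<1$ for every $i\in\mathcal V$ and every $t\ge T$.
   Context: Let $n\ge1$ and $\mathcal V=\{1,\dots,n\}$. Let $P\in\mathbb{R}^{n\times n}$ be a row-stochastic, irreducible, aperiodic matrix (the graph on $\mathcal V$ with edge $(i,j)$ iff $P_{ij}>0$ is strongly connected with gcd of cycle lengths $1$). For $z\in[0,1]^n$, $W(z)=(I-[z])P+[z]$ ($[z]$ the diagonal matrix with diagonal $z$) and $H(z)=\lim_{t\to\infty}W(z)^t$ (the limit exists and is row-stochastic). Let $\sigma_1^2,\dots,\sigma_n^2>0$. Agent $i$'s cost is $\upsilon_i(z)=\sum_jH_{ij}(z)^2\sigma_j^2$, and her best response set to $z_{-i}=(z_j)_{j\ne i}$ is $\mathcal B_i(z_{-i})=\arg\min_{z_i\in[0,1]}\upsilon_i(z_i,z_{-i})$ (always nonempty; a singleton or an interval). The asynchronous best response dynamics is the discrete-time Markov chain $Z(t)$ on $[0,1]^n$ in which, at each time $t=0,1,2,\dots$, an agent $k$ is chosen uniformly at random from $\mathcal V$, $Z_k(t+1)$ is drawn uniformly at random from $\mathcal B_k(Z_{-k}(t))$, and $Z_{-k}(t+1)=Z_{-k}(t)$. *)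

(* Defs.v *)
From HB Require Import structures.
From mathcomp Require Import all_boot all_order all_algebra.
From mathcomp Require Import all_classical all_reals all_analysis.
Set Implicit Arguments. Unset Strict Implicit. Unset Printing Implicit Defensive.
Import Order.TTheory GRing.Theory Num.Theory.
Import numFieldNormedType.Exports.
Local Open Scope classical_set_scope.
Local Open Scope ring_scope.

Section Defs.
Variables (R : realType) (n : nat).

Definition row_stochastic (P : 'M[R]_n) : Prop :=
  (forall i j, 0 <= P i j) /\ (forall i, \sum_(j < n) P i j = 1).

Definition graph_rel (P : 'M[R]_n) : rel 'I_n := fun i j => 0 < P i j.

Definition irreducible_mx (P : 'M[R]_n) : Prop :=
  forall i j, connect (graph_rel P) i j.

Definition cycle_length (P : 'M[R]_n) (L : nat) : Prop :=
  (0 < L)%N /\ exists (i : 'I_n) (s : seq 'I_n),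
    size s = L /\ path (graph_rel P) i s /\ last i s = i.

(* aperiodic: the gcd of the cycle lengths is 1, i.e. 1 is the only common
   divisor of all cycle lengths *)
Definition aperiodic_mx (P : 'M[R]_n) : Prop :=
  forall d : nat, (forall L, cycle_length P L -> (d %| L)%N) -> d = 1%N.

Definition mpow (A : 'M[R]_n) (t : nat) : 'M[R]_n := iter t (mulmx A) 1%:M.

Definition Wmx (P : 'M[R]_n) (z : 'I_n -> R) : 'M[R]_n :=
  (1%:M - diag_mx (\row_i z i)) *m P + diag_mx (\row_i z i).

Definition Hmx (P : 'M[R]_n) (z : 'I_n -> R) (i j : 'I_n) : R :=
  limn (fun t : nat => mpow (Wmx P z) t i j).

Definition cost (P : 'M[R]_n) (sigma2 : 'I_n -> R) (i : 'I_n) (z : 'I_n -> R) : R :=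
  \sum_(j < n) (Hmx P z i j) ^+ 2 * sigma2 j.

Definition setc (z : 'I_n -> R) (i : 'I_n) (x : R) : 'I_n -> R :=
  fun j => if j == i then x else z j.

(* best response set B_i(z_{-i}) (depends on z only through z_{-i}) *)
Definition best_resp (P : 'M[R]_n) (sigma2 : 'I_n -> R) (i : 'I_n) (z : 'I_n -> R)
  : set R :=
  [set x | 0 <= x <= 1 /\
     forall y, 0 <= y <= 1 -> cost P sigma2 i (setc z i x) <= cost P sigma2 i (setc z i y)].

(* one asynchronous best-response step: agent k updates to the point of the
   (singleton or closed interval) set B_k at relative position u in [0,1];
   with u uniform on [0,1] this is a uniform draw from B_k *)
Definition br_step (P : 'M[R]_n) (sigma2 : 'I_n -> R) (z : 'I_n -> R) (k : 'I_n) (u : R)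
  : 'I_n -> R :=
  let B := best_resp P sigma2 k z in
  setc z k (inf B + u * (sup B - inf B)).

Fixpoint br_chain (P : 'M[R]_n) (sigma2 : 'I_n -> R) (z0 : 'I_n -> R)
  (k : nat -> 'I_n) (u : nat -> R) (t : nat) : 'I_n -> R :=
  match t with
  | 0 => z0
  | t'.+1 => br_step P sigma2 (br_chain P sigma2 z0 k u t') (k t') (u t')
  end.

End Defs.

(* Main.v *)
Require Import Defs.
From HB Require Import structures.
From mathcomp Require Import all_boot all_order all_algebra.
From mathcomp Require Import all_classical all_reals all_analysis.
From mathcomp Require Import ring lra.
Set Implicit Arguments. Unset Strict Implicit. Unset Printing Implicit Defensive.
Import Order.TTheory GRing.Theory Num.Theory.
Import numFieldNormedType.Exports.
Local Open Scope classical_set_scope.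
Local Open Scope ring_scope.

Section Mx.
Variables (R : realType) (n : nat).
Implicit Types (W A B : 'M[R]_n).

Definition stoch W := (forall i j, 0 <= W i j) /\ (forall i, \sum_j W i j = 1).

Lemma le_sum_term (F : 'I_n -> R) j : (forall i, 0 <= F i) -> F j <= \sum_i F i.
Proof. by move=> F0; rewrite (bigD1 j) //= lerDl sumr_ge0. Qed.

Lemma mpowS W t : mpow W t.+1 = W *m mpow W t. Proof. by []. Qed.
Lemma mpow0 W : mpow W 0 = 1%:M. Proof. by []. Qed.
Lemma mpowD W a b : mpow W (a + b) = mpow W a *m mpow W b.
Proof.
elim: a => [|a IH]; first by rewrite add0n mpow0 mul1mx.
by rewrite addSn !mpowS IH mulmxA.
Qed.
Lemma mpowSr W t : mpow W t.+1 = mpow W t *m W.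
Proof. by rewrite -addn1 mpowD /mpow /= mulmx1. Qed.

Lemma stoch_mul A B : stoch A -> stoch B -> stoch (A *m B).
Proof.
move=> [A0 A1] [B0 B1]; split => [i j|i].
  by rewrite mxE; apply: sumr_ge0 => l _; apply: mulr_ge0.
under eq_bigr do rewrite mxE.
rewrite exchange_big /=.
under eq_bigr do rewrite -mulr_sumr B1 mulr1.
exact: A1.
Qed.

Lemma stoch1 : stoch 1%:M.
Proof.
split => [i j|i]; first by rewrite mxE ler0n.
rewrite (bigD1 i) //= mxE eqxx big1 ?addr0 // => j ji.
by rewrite mxE eq_sym (negbTE ji).
Qed.

Lemma mpow_stoch W t : stoch W -> stoch (mpow W t).
Proof. by move=> sW; elim: t => [|t IH]; [exact: stoch1 | exact: stoch_mul]. Qed.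

Lemma stoch_ge0 W i j : stoch W -> 0 <= W i j.
Proof. by case=> + _; apply. Qed.

Lemma stoch_le1 W i j : stoch W -> W i j <= 1.
Proof. by move=> [W0 W1]; rewrite -(W1 i); apply: le_sum_term. Qed.

Lemma mpow_ge W a b i l j : stoch W ->
  mpow W a i l * mpow W b l j <= mpow W (a + b) i j.
Proof.
move=> sW; rewrite mpowD mxE.
rewrite (bigD1 l) //= lerDl; apply: sumr_ge0 => l' _.
by apply: mulr_ge0; apply: stoch_ge0; apply: mpow_stoch.
Qed.

End Mx.

Lemma WmxE (R : realType) n (P : 'M[R]_n) z i j :
  Wmx P z i j = (1 - z i) * P i j + z i *+ (i == j).
Proof.
rewrite /Wmx mxE mulmxBl mul1mx mul_diag_mx !mxE.
by rewrite mulrBl mul1r.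
Qed.

Lemma cvg_of_cauchy (R : realType) (u : nat -> R) :
  (forall e, 0 < e -> exists N, forall t, (N <= t)%N -> `|u N - u t| < e) -> cvgn u.
Proof.
move=> H; apply/cauchy_cvgP; apply: cauchy_exP => e e0.
by have [N HN] := H e e0; exists (u N); exists N => // t Ht.
Qed.

Lemma geom_small (R : realType) (x e : R) : 0 <= x < 1 -> 0 < e -> exists q, x ^+ q < e.
Proof.
move=> /andP[x0 x1] e0.
have cx : `|x| < 1 by rewrite ger0_norm.
move: (cvg_expr cx) => /cvgr_dist_lt /(_ e e0) [N _ HN].
exists N; have := HN N (leqnn N); rewrite sub0r normrN ger0_norm //.
exact: exprn_ge0.
Qed.

Lemma lim_le_ev (R : realType) (u : nat -> R) L b :
  u @ \oo --> L -> (exists N, forall t, (N <= t)%N -> u t <= b) -> L <= b.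
Proof. by move=> uL [N HN]; apply: (cvgr_to_le uL); exists N. Qed.

Lemma lim_ge_ev (R : realType) (u : nat -> R) L b :
  u @ \oo --> L -> (exists N, forall t, (N <= t)%N -> b <= u t) -> b <= L.
Proof. by move=> uL [N HN]; apply: (cvgr_to_ge uL); exists N. Qed.

Lemma cvg_sumf (R : realType) (I : finType) (Q : pred I) (u : I -> nat -> R) (L : I -> R) :
  (forall i, u i @ \oo --> L i) ->
  (fun t => \sum_(i | Q i) u i t) @ \oo --> \sum_(i | Q i) L i.
Proof.
move=> H; apply: (@cvg_big R I +%R 0 Q (@add_continuous R)) => //.
Qed.

Section Conv.
Variables (R : realType) (n : nat).
Implicit Types (W A : 'M[R]_n).

Lemma mpow1 W : mpow W 1 = W. Proof. by rewrite mpowS mpow0 mulmx1. Qed.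

Lemma absorb_row W s t j : (forall j, W s j = (s == j)%:R) ->
  mpow W t s j = (s == j)%:R.
Proof.
move=> Ws; elim: t j => [|t IH] j; first by rewrite mpow0 mxE.
rewrite mpowS mxE (bigD1 s) //= Ws eqxx mul1r IH big1 ?addr0 // => l ls.
by rewrite Ws eq_sym (negbTE ls) mul0r.
Qed.

Lemma reach W (P : 'M[R]_n) (Tg : pred 'I_n) q :
  stoch W -> 0 < q ->
  (forall a b, ~~ Tg a -> 0 < P a b -> q <= W a b) ->
  (forall a t, Tg a -> q ^+ t <= mpow W t a a) ->
  forall a p, path (graph_rel P) a p -> Tg (last a p) ->
  exists2 s, Tg s & q ^+ size p <= mpow W (size p) a s.
Proof.
move=> sW q0 HW HT a p; elim: p a => [|b p IH] a /=.
  by move=> _ Ta; exists a => //; apply: HT.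
move=> /andP[ab pb] lb.
case Ta: (Tg a); first by exists a => //; apply: HT.
have [s Ts Hs] := IH b pb lb.
exists s => //.
apply: le_trans (mpow_ge 1 (size p) a b s sW).
rewrite mpow1 exprS; apply: ler_pM => //.
- exact: ltW.
- exact: exprn_ge0 (ltW q0).
- by apply: HW; rewrite ?Ta.
Qed.

Lemma reach_m W (P : 'M[R]_n) (Tg : pred 'I_n) q m :
  stoch W -> 0 < q ->
  (forall a b, ~~ Tg a -> 0 < P a b -> q <= W a b) ->
  (forall a t, Tg a -> q ^+ t <= mpow W t a a) ->
  (forall a, exists2 p, path (graph_rel P) a p & Tg (last a p) /\ (size p <= m)%N) ->
  forall a, exists2 s, Tg s & q ^+ m <= mpow W m a s.
Proof.
move=> sW q0 HW HT Hp a; have [p pa [lp sp]] := Hp a.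
have [s Ts Hs] := reach sW q0 HW HT pa lp.
exists s => //.
rewrite -(subnKC sp).
apply: le_trans (mpow_ge (size p) (m - size p) a s s sW).
rewrite exprD; apply: ler_pM => //.
- exact: exprn_ge0 (ltW q0).
- exact: exprn_ge0 (ltW q0).
- exact: HT.
Qed.

Lemma paths_m (P : 'M[R]_n) (Tg : pred 'I_n) : irreducible_mx P -> (exists s, Tg s) ->
  exists m, forall a, exists2 p, path (graph_rel P) a p & Tg (last a p) /\ (size p <= m)%N.
Proof.
move=> irr [s Ts].
have: forall a, exists p, path (graph_rel P) a p /\ Tg (last a p).
  by move=> a; have /connectP[p pa sE] := irr a s; exists p; rewrite -sE.
move=> /fin_all_exists[f Hf].
exists (\max_a size (f a))%N => a; have [h1 h2] := Hf a; exists (f a) => //; split => //.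
exact: (@leq_bigmax _ (fun a => size (f a)) a).
Qed.

Lemma prod_le_factor (I : finType) (F : I -> R) i :
  (forall i, 0 <= F i <= 1) -> \prod_j F j <= F i.
Proof.
move=> H; rewrite (bigD1 i) //= -[leRHS]mulr1; apply: ler_wpM2l.
  by have /andP[] := H i.
by apply: prodr_ile1 => j _; apply: H.
Qed.

Lemma rho_ex (P : 'M[R]_n) (z : 'I_n -> R) (Tg : pred 'I_n) :
  (forall a, ~~ Tg a -> z a < 1) ->
  exists2 r, 0 < r <= 1 & forall a b, ~~ Tg a -> 0 < P a b -> r <= (1 - z a) * P a b.
Proof.
move=> Hz.
pose F (ab : 'I_n * 'I_n) := if ~~ Tg ab.1 && (0 < P ab.1 ab.2)
  then Num.min 1 ((1 - z ab.1) * P ab.1 ab.2) else 1.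
have F01 : forall ab, 0 < F ab <= 1.
  move=> [a b]; rewrite /F /=; case: ifP => [/andP[Ta Pab]|_]; last by rewrite lexx ltr01.
  rewrite ge_min lexx /= lt_min ltr01 /=.
  rewrite andbT mulr_gt0 // subr_gt0; exact: Hz.
exists (\prod_ab F ab).
  apply/andP; split; first by apply: prodr_gt0 => ab _; have /andP[] := F01 ab.
  by apply: prodr_ile1 => ab _; have /andP[/ltW -> ->] := F01 ab.
move=> a b Ta Pab.
apply: le_trans (prod_le_factor (a, b) _) _.
  by move=> ab; have /andP[/ltW -> ->] := F01 ab.
by rewrite /F /= Ta Pab /= ge_min lexx orbT.
Qed.

End Conv.

Lemma ex_max (R : realType) (I : finType) (i0 : I) (F : I -> R) :
  exists l, forall l', F l' <= F l.
Proof.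
case: (@arg_maxP _ _ I i0 predT F isT) => l _ Hl.
by exists l => l'; exact: Hl.
Qed.

Lemma ex_min (R : realType) (I : finType) (i0 : I) (F : I -> R) :
  exists l, forall l', F l <= F l'.
Proof.
have [l Hl] := ex_max i0 (fun i => - F i).
by exists l => l'; rewrite -lerN2; exact: Hl.
Qed.

Lemma absdiff_le (R : realType) (X Y c : R) : 0 <= X <= c -> 0 <= Y <= c -> `|X - Y| <= c.
Proof. move=> /andP[? ?] /andP[? ?]; rewrite ler_norml; apply/andP; split; lra. Qed.

Section Model.
Variables (R : realType) (n : nat) (P : 'M[R]_n).
Hypothesis hP : row_stochastic P.

Lemma P_ge0 i j : 0 <= P i j. Proof. by case: hP. Qed.

Lemma Wmx_stoch z : (forall i, 0 <= z i <= 1) -> stoch (Wmx P z).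
Proof.
move=> hz; case: hP => P0 P1; split => [i j|i].
  have /andP[z0 z1] := hz i.
  rewrite WmxE; apply: addr_ge0; last exact: mulrn_wge0.
  by apply: mulr_ge0 => //; rewrite subr_ge0.
under eq_bigr do rewrite WmxE.
rewrite big_split /= -mulr_sumr P1 mulr1 (bigD1 i) //= eqxx mulr1n big1 ?addr0.
  by rewrite subrK.
by move=> j ji; rewrite eq_sym (negbTE ji) mulr0n.
Qed.

Lemma Wmx_absorb z s : z s = 1 -> forall j, Wmx P z s j = (s == j)%:R.
Proof. by move=> zs j; rewrite WmxE zs subrr mul0r add0r. Qed.

Lemma Wmx_ge z a b : 0 <= z a <= 1 -> (1 - z a) * P a b <= Wmx P z a b.
Proof. by move=> /andP[z0 z1]; rewrite WmxE lerDl mulrn_wge0. Qed.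

Lemma Wmx_diag z a : 0 <= z a <= 1 -> z a <= Wmx P z a a.
Proof.
move=> /andP[z0 z1]; rewrite WmxE eqxx mulr1n lerDr.
by apply: mulr_ge0; [rewrite subr_ge0 | apply: P_ge0].
Qed.

Lemma diag_pow (W : 'M[R]_n) a t : stoch W -> W a a ^+ t <= mpow W t a a.
Proof.
move=> sW; elim: t => [|t IH]; first by rewrite expr0 mpow0 mxE eqxx.
apply: le_trans (mpow_ge 1 t a a a sW).
rewrite mpow1 exprS; apply: ler_wpM2l; first exact: stoch_ge0.
exact: IH.
Qed.

Lemma cost_one (sig : 'I_n -> R) k z : cost P sig k (setc z k 1) = sig k.
Proof.
have zk : setc z k 1 k = 1 by rewrite /setc eqxx.
have HE j : Hmx P (setc z k 1) k j = (k == j)%:R.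
  rewrite /Hmx.
  have -> : (fun t => mpow (Wmx P (setc z k 1)) t k j) = (fun _ => (k == j)%:R).
    by apply: funext => t; apply: absorb_row; apply: Wmx_absorb.
  exact: lim_cst.
rewrite /cost (bigD1 k) //= HE eqxx expr1n mul1r big1 ?addr0 // => j jk.
by rewrite HE eq_sym (negbTE jk) expr0n mul0r.
Qed.


Lemma caseA (sig : 'I_n -> R) k z :
  irreducible_mx P ->
  (forall i, 0 <= z i <= 1) -> z k < 1 -> (exists s, z s = 1) ->
  (forall s, z s = 1 -> sig s <= sig k) -> (forall j, 0 <= sig j) ->
  cost P sig k z <= sig k.
Proof.
move=> irr hz zk [s0 zs0] hsig sig0.
pose W := Wmx P z.
have sW : stoch W := Wmx_stoch hz.
pose S : pred 'I_n := fun s => z s == 1.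
have nS a : ~~ S a -> z a < 1.
  by move=> Sa; have /andP[_ za] := hz a; rewrite lt_neqAle za andbT; exact: Sa.
have [r /andP[r0 r1] Hr] := rho_ex P nS.
have [m Hpaths] : exists m, forall a, exists2 p, path (graph_rel P) a p & S (last a p) /\ (size p <= m)%N.
  by apply: paths_m irr _; exists s0; apply/eqP.
have HW : forall a b, ~~ S a -> 0 < P a b -> r <= W a b.
  by move=> a b Sa Pab; apply: le_trans (Hr a b Sa Pab) _; apply: Wmx_ge.
have HT : forall a t, S a -> r ^+ t <= mpow W t a a.
  move=> a t /eqP za; rewrite (absorb_row _ _ (Wmx_absorb za)) eqxx.
  by apply: exprn_ile1 => //; exact: ltW.
have Hm := reach_m sW r0 HW HT Hpaths.
set d := r ^+ m in Hm.
have d0 : 0 < d by apply: exprn_gt0.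
have d1 : d <= 1 by apply: exprn_ile1 => //; exact: ltW.
pose rt t j := mpow W t k j.
pose mu t := \sum_(l | ~~ S l) rt t l.
have rt0 t j : 0 <= rt t j by apply: stoch_ge0; apply: mpow_stoch.
have rt1 t j : rt t j <= 1 by apply: stoch_le1; apply: mpow_stoch.
have mu0 t : 0 <= mu t by apply: sumr_ge0.
have B1 a p : \sum_(l | ~~ S l) mpow W p a l <= 1.
  have [A0 A1] := mpow_stoch p sW.
  rewrite -(A1 a) [leRHS](bigID S) /= lerDr; apply: sumr_ge0 => l _; exact: A0.
have Bm a : ~~ S a -> \sum_(l | ~~ S l) mpow W m a l <= 1 - d.
  move=> Sa; have [s Ss Hs] := Hm a.
  have [A0 A1] := mpow_stoch m sW.
  have h1 : \sum_(l | S l) mpow W m a l + \sum_(l | ~~ S l) mpow W m a l = 1.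
    by rewrite -(A1 a) [RHS](bigID S).
  have h2 : mpow W m a s <= \sum_(l | S l) mpow W m a l.
    by rewrite (bigD1 s) //= lerDl; apply: sumr_ge0 => l _; exact: A0.
  lra.
have mu_step t p c : 0 <= c ->
    (forall a, ~~ S a -> \sum_(l | ~~ S l) mpow W p a l <= c) ->
    mu (t + p)%N <= c * mu t.
  move=> c0 Hc; rewrite /mu /rt.
  under eq_bigr do rewrite mpowD mxE.
  rewrite exchange_big /= (bigID S) /= big1 ?add0r; last first.
    move=> a Sa; apply: big1 => l Sl.
    rewrite (absorb_row _ _ (Wmx_absorb (eqP Sa))).
    have -> : (a == l) = false by apply/eqP => al; move: Sl; rewrite -al Sa.
    by rewrite mulr0.
  rewrite mulr_sumr; apply: ler_sum => a Sa.
  rewrite -mulr_sumr mulrC; apply: ler_wpM2r; [exact: rt0 | exact: Hc].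
have mu_geom q : mu (q * m)%N <= (1 - d) ^+ q.
  elim: q => [|q IH]; first by rewrite mul0n expr0 /mu /rt; apply: B1.
  rewrite mulSnr exprS.
  apply: le_trans (mu_step _ _ _ _ Bm) _; first by rewrite subr_ge0.
  by apply: ler_wpM2l; [rewrite subr_ge0 | exact: IH].
have mu_le q t : (q * m <= t)%N -> mu t <= (1 - d) ^+ q.
  move=> qt; rewrite -(subnKC qt).
  apply: le_trans (mu_step _ _ 1 ler01 (fun a _ => B1 a _)) _.
  by rewrite mul1r; exact: mu_geom.
have rt_mu t j : ~~ S j -> rt t j <= mu t.
  by move=> Sj; rewrite /mu (bigD1 j) //= lerDl sumr_ge0.
have Hcau t t' j : (t <= t')%N -> `|rt t j - rt t' j| <= mu t.
  move=> tt'; have [p ->] : exists p, t' = (t + p)%N by exists (t' - t)%N; rewrite subnKC.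
  have E : rt (t + p)%N j = (if S j then rt t j else 0) +
      \sum_(a | ~~ S a) rt t a * mpow W p a j.
    rewrite /rt mpowD mxE (bigID S) /=; congr (_ + _).
    case: ifP => Sj.
      rewrite (bigD1 j) //= (absorb_row _ _ (Wmx_absorb (eqP Sj))) eqxx mulr1.
      rewrite big1 ?addr0 // => a /andP[Sa aj].
      by rewrite (absorb_row _ _ (Wmx_absorb (eqP Sa))) (negbTE aj) mulr0.
    apply: big1 => a Sa; rewrite (absorb_row _ _ (Wmx_absorb (eqP Sa))).
    have -> : (a == j) = false by apply/eqP => aj; move: Sj; rewrite -aj Sa.
    by rewrite mulr0.
  have X0 : 0 <= \sum_(a | ~~ S a) rt t a * mpow W p a j.
    by apply: sumr_ge0 => a _; apply: mulr_ge0 => //; apply: stoch_ge0; apply: mpow_stoch.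
  have X1 : \sum_(a | ~~ S a) rt t a * mpow W p a j <= mu t.
    apply: ler_sum => a _; apply: ler_piMr => //; apply: stoch_le1; exact: mpow_stoch.
  rewrite E; case: ifP => Sj.
    by rewrite opprD addrA subrr add0r normrN ger0_norm.
  rewrite add0r; apply: absdiff_le; apply/andP; split => //.
  by apply: rt_mu; rewrite Sj.
have cv j : rt ^~ j @ \oo --> Hmx P z k j.
  apply: cvg_of_cauchy => e e0.
  have [q Hq] : exists q, (1 - d) ^+ q < e by apply: geom_small => //; apply/andP; split; lra.
  exists (q * m)%N => t Ht; apply: le_lt_trans (Hcau _ _ j Ht) _.
  exact: le_lt_trans (mu_geom q) Hq.
pose H j := Hmx P z k j.
have H01 j : 0 <= H j <= 1.
  apply/andP; split.
    by apply: (lim_ge_ev (cv j)); exists 0%N.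
  by apply: (lim_le_ev (cv j)); exists 0%N.
have HS j : ~~ S j -> H j = 0.
  move=> Sj; apply/eqP; rewrite eq_le; have /andP[-> _] := H01 j; rewrite andbT.
  rewrite leNgt; apply/negP => Hpos.
  have [q Hq] : exists q, (1 - d) ^+ q < H j by apply: geom_small => //; apply/andP; split; lra.
  have : H j <= (1 - d) ^+ q.
    apply: (lim_le_ev (cv j)); exists (q * m)%N => t Ht.
    exact: le_trans (rt_mu _ _ Sj) (mu_le _ _ Ht).
  lra.
have Hsum : \sum_j H j <= 1.
  have hc := @cvg_sumf R _ xpredT (fun j t => rt t j) H cv.
  have := lim_le_ev (b := 1) hc; apply.
  by exists 0%N => t _; have [_ ->] := mpow_stoch t sW.
rewrite /cost; apply: (@le_trans _ _ (\sum_j H j * sig k)).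
  apply: ler_sum => j _; case Sj: (S j).
    have /andP[h0 h1] := H01 j; rewrite -/(H j) expr2 -mulrA.
    apply: ler_wpM2l => //; apply: le_trans (hsig j (eqP Sj)).
    exact: ler_piMl.
  by rewrite -/(H j) HS ?Sj // expr0n !mul0r.
by rewrite -mulr_suml; apply: ler_piMl.
Qed.


Lemma pow_mono (a b : R) t : 0 <= a -> a <= b -> a ^+ t <= b ^+ t.
Proof.
move=> a0 ab; apply: lerXn2r => //; rewrite nnegrE //.
exact: le_trans ab.
Qed.

Lemma bernoulli (y : R) m : 0 <= y <= 1 -> 1 - y ^+ m <= m%:R * (1 - y).
Proof.
move=> /andP[y0 y1]; elim: m => [|m IH]; first by rewrite expr0 subrr mul0r.
have h : y ^+ m <= 1 by apply: exprn_ile1.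
have h2 : y ^+ m * (1 - y) <= 1 - y by apply: ler_piMl => //; rewrite subr_ge0.
rewrite exprS -natr1 mulrDl mul1r.
have -> : 1 - y * y ^+ m = (1 - y ^+ m) + y ^+ m * (1 - y) by ring.
exact: lerD.
Qed.

Lemma doeblin (A : 'M[R]_n) (g : 'I_n -> R) k d c : stoch A -> 0 <= d ->
  (forall i, d <= A i k) -> (forall l l', g l - g l' <= c) ->
  forall i i', \sum_l A i l * g l - \sum_l A i' l * g l <= (1 - d) * c.
Proof.
move=> sA d0 Hd Hc i i'.
have [lM HM] := ex_max k g; have [lm Hmn] := ex_min k g.
have [A0 A1] := sA.
have rest a : \sum_(l | l != k) A a l = 1 - A a k.
  by have := A1 a; rewrite (bigD1 k) //=; lra.
have up : \sum_l A i l * g l <= g lM - d * (g lM - g k).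
  rewrite (bigD1 k) //=.
  have h1 : \sum_(l | l != k) A i l * g l <= (1 - A i k) * g lM.
    rewrite -rest mulr_suml; apply: ler_sum => l _; apply: ler_wpM2l => //.
  have h2 : d * (g lM - g k) <= A i k * (g lM - g k).
    by apply: ler_wpM2r; [rewrite subr_ge0 | exact: Hd].
  lra.
have lo : g lm + d * (g k - g lm) <= \sum_l A i' l * g l.
  rewrite (bigD1 k) //=.
  have h1 : (1 - A i' k) * g lm <= \sum_(l | l != k) A i' l * g l.
    rewrite -rest mulr_suml; apply: ler_sum => l _; apply: ler_wpM2l => //.
  have h2 : d * (g k - g lm) <= A i' k * (g k - g lm).
    by apply: ler_wpM2r; [rewrite subr_ge0 | exact: Hd].
  lra.
have d1 : d <= 1 by apply: le_trans (Hd i) _; apply: stoch_le1.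
have h3 : (1 - d) * (g lM - g lm) <= (1 - d) * c.
  by apply: ler_wpM2l; [rewrite subr_ge0 | exact: Hc].
lra.
Qed.

Lemma avg_close (A : 'M[R]_n) (g : 'I_n -> R) c i i' : stoch A ->
  (forall l l', g l - g l' <= c) -> `|g i' - \sum_a A i a * g a| <= c.
Proof.
move=> [A0 A1] Hc.
have E : \sum_a A i a * g a - g i' = \sum_a A i a * (g a - g i').
  rewrite -[X in _ - X]mul1r -(A1 i) mulr_suml -sumrB.
  by apply: eq_bigr => a _; rewrite mulrBr.
rewrite distrC E ler_norml; apply/andP; split.
  rewrite -[X in - X]mul1r -(A1 i) mulr_suml -sumrN; apply: ler_sum => a _.
  rewrite -mulrN; apply: ler_wpM2l => //; have := Hc i' a; lra.
rewrite -[X in _ <= X]mul1r -(A1 i) mulr_suml; apply: ler_sum => a _.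
by apply: ler_wpM2l => //; apply: Hc.
Qed.

Lemma caseB (sig : 'I_n -> R) k z :
  irreducible_mx P -> (forall i, 0 <= z i <= 1) -> (forall j, j != k -> z j < 1) ->
  (forall j, 0 < sig j) ->
  exists y, 0 <= y < 1 /\ cost P sig k (setc z k y) <= sig k.
Proof.
move=> irr hz hzk sig0.
have nT a : ~~ (pred1 k) a -> z a < 1 by move=> ak; apply: hzk.
have [r /andP[r0 r1] Hr] := rho_ex P nT.
have [m Hpaths] : exists m, forall a, exists2 p, path (graph_rel P) a p &
    (pred1 k) (last a p) /\ (size p <= m)%N.
  by apply: paths_m irr _; exists k => /=.
pose q := r / 2.
have q0 : 0 < q by rewrite divr_gt0.
have qr : q <= r by rewrite /q; lra.
have qh : q <= 1 / 2 by rewrite /q; lra.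
pose d := q ^+ m.
have d0 : 0 < d by apply: exprn_gt0.
have d1 : d <= 1 by apply: exprn_ile1; lra.
pose M := \sum_j sig j.
have sigM j : sig j <= M by apply: le_sum_term => i; exact: ltW.
have M0 : 0 < M by apply: lt_le_trans (sig0 k) (sigM k).
pose eta := Num.min (1 / 2) (d * sig k / (M * (m.+1)%:R)).
have eta0 : 0 < eta.
  rewrite lt_min; apply/andP; split; first lra.
  by apply: divr_gt0; [apply: mulr_gt0 | apply: mulr_gt0].
have eta1 : eta <= 1 / 2 by rewrite ge_min lexx.
have eta2 : eta * (m.+1)%:R <= d * sig k / M.
  have h : eta <= d * sig k / (M * (m.+1)%:R) by rewrite ge_min lexx orbT.
  have -> : d * sig k / M = d * sig k / (M * (m.+1)%:R) * (m.+1)%:R.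
    field; apply/andP; split; last exact: lt0r_neq0.
    by rewrite addrC natr1 pnatr_eq0.
  by apply: ler_wpM2r.
pose y := 1 - eta.
exists y; split; first by apply/andP; split; rewrite /y; lra.
set z' := setc z k y.
have hz' : forall i, 0 <= z' i <= 1.
  by move=> i; rewrite /z' /setc; case: eqP => _; [rewrite /y; apply/andP; split; lra | exact: hz].
pose W := Wmx P z'.
have sW : stoch W := Wmx_stoch hz'.
have HW a b : ~~ pred1 k a -> 0 < P a b -> q <= W a b.
  move=> ak Pab; apply: le_trans qr _; apply: le_trans (Hr a b ak Pab) _.
  have -> : z a = z' a by rewrite /z' /setc; move: ak => /= /negbTE ->.
  exact: Wmx_ge.
have Wkk : y <= W k k by have := Wmx_diag (hz' k); rewrite /z' /setc eqxx.
have ykk t : y ^+ t <= mpow W t k k.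
  apply: le_trans (diag_pow k t sW); apply: pow_mono => //; rewrite /y; lra.
have HT a t : pred1 k a -> q ^+ t <= mpow W t a a.
  move=> /eqP ->; apply: le_trans (ykk t); apply: pow_mono; rewrite /y; lra.
have Hm := reach_m sW q0 HW HT Hpaths.
have Hd a : d <= mpow W m a k by have [s /eqP -> Hs] := Hm a.
have osc j qq t : (qq * m <= t)%N -> forall l l',
    mpow W t l j - mpow W t l' j <= (1 - d) ^+ qq.
  elim: qq t => [|qq IH] t Ht l l'.
    have := stoch_le1 l j (mpow_stoch t sW); have := stoch_ge0 l' j (mpow_stoch t sW).
    rewrite expr0; lra.
  have [t0 -> Ht0] : exists2 t0, t = (m + t0)%N & (qq * m <= t0)%N.
    rewrite mulSnr in Ht.
    have mt : (m <= t)%N by apply: leq_trans Ht; apply: leq_addl.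
    exists (t - m)%N; first by rewrite subnKC.
    by rewrite leq_subRL // addnC.
  rewrite !mpowD !mxE exprS.
  apply: (doeblin (k := k)) => //; first exact: mpow_stoch; first exact: ltW.
  exact: IH.
have cv j : (fun t => mpow W t k j) @ \oo --> Hmx P z' k j.
  apply: cvg_of_cauchy => e e0.
  have [qq Hq] : exists qq, (1 - d) ^+ qq < e by apply: geom_small => //; apply/andP; split; lra.
  exists (qq * m)%N => t Ht.
  have [p ->] : exists p, t = (p + qq * m)%N by exists (t - qq * m)%N; rewrite subnK.
  rewrite mpowD mxE; apply: le_lt_trans _ Hq.
  apply: (@avg_close (mpow W p) (fun a => mpow W (qq * m) a j)); first exact: mpow_stoch.
  exact: (osc j qq (qq * m)%N (leqnn _)).
pose H j := Hmx P z' k j.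
have H0 j : 0 <= H j.
  by apply: (lim_ge_ev (cv j)); exists 0%N => t _; apply: stoch_ge0; apply: mpow_stoch.
have H1 j : H j <= 1.
  by apply: (lim_le_ev (cv j)); exists 0%N => t _; apply: stoch_le1; apply: mpow_stoch.
have Hs : \sum_(j | j != k) H j + H k <= 1.
  have hc : (fun t => \sum_(j | j != k) mpow W t k j + mpow W t k k) @ \oo -->
      \sum_(j | j != k) H j + H k.
    by apply: cvgD; [exact: (@cvg_sumf R _ (fun j => j != k) (fun j t => mpow W t k j) H cv) | exact: cv k].
  apply: (lim_le_ev hc).
  exists 0%N => t _ /=.
  have [_ A1] := mpow_stoch t sW; have := A1 k; rewrite (bigD1 k) //=; lra.
set a := mpow W m k k.
have key : (1 - H k) * d <= H k * (1 - a).
  have cs : (fun t => mpow W (t + m) k k) @ \oo --> H k.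
    by rewrite (cvg_shiftn m (fun t => mpow W t k k)); exact: cv k.
  have cl : (fun t => mpow W t k k * (a - d) + d) @ \oo --> H k * (a - d) + d.
    by apply: cvgD; [apply: cvgMr_tmp; exact: cv k | exact: cvg_cst].
  have cB : (fun t => mpow W (t + m) k k - (mpow W t k k * (a - d) + d)) @ \oo -->
      H k - (H k * (a - d) + d) by apply: cvgB.
  have := lim_ge_ev (b := 0) cB.
  have h : (exists N, forall t, (N <= t)%N -> 0 <= (mpow W (t + m) k k - (mpow W t k k * (a - d) + d))).
    exists 0%N => t _.
    rewrite mpowD mxE (bigD1 k) //=.
    have h1 : \sum_(l | l != k) mpow W t k l * d <= \sum_(l | l != k) mpow W t k l * mpow W m l k.
      apply: ler_sum => l _; apply: ler_wpM2l; [apply: stoch_ge0; exact: (mpow_stoch _ sW) | exact: Hd].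
    have h2 : \sum_(l | l != k) mpow W t k l = 1 - mpow W t k k.
      have [_ A1] := mpow_stoch t sW; have := A1 k; rewrite (bigD1 k) //=; lra.
    rewrite -mulr_suml h2 in h1; rewrite -/a; lra.
  move=> /(_ h); lra.
have y01 : 0 <= y <= 1 by apply/andP; split; rewrite /y; lra.
have bern := bernoulli m y01.
have ak : y ^+ m <= a := ykk m.
have a1 : a <= 1 by apply: stoch_le1; apply: mpow_stoch.
have ha : H k * (1 - a) <= 1 - a by apply: ler_piMl => //; rewrite subr_ge0.
have me : m%:R * eta <= d * sig k / M.
  move: eta2; rewrite -natr1; lra.
have xd : (1 - H k) * d <= sig k / M * d.
  have -> : sig k / M * d = d * sig k / M by ring.
  rewrite /y in bern; lra.
have xM : (1 - H k) * M <= sig k.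
  by rewrite ler_pM2r // in xd; rewrite -ler_pdivlMr.
pose S' := \sum_(j | j != k) H j.
have Hj j : j != k -> H j <= 1 - H k.
  move=> jk; apply: le_trans (_ : S' <= _); last by rewrite /S'; lra.
  by rewrite /S' (bigD1 j) //= lerDl; apply: sumr_ge0.
rewrite /cost (bigD1 k) //=.
have T1 : \sum_(j | j != k) Hmx P z' k j ^+ 2 * sig j <= (1 - H k) * M * S'.
  rewrite /S' mulr_sumr; apply: ler_sum => j jk.
  rewrite -/(H j) expr2 -mulrA [_ * M * H j]mulrC; apply: ler_wpM2l => //.
  by apply: ler_pM => //; [exact: ltW | exact: Hj].
have x0 : 0 <= 1 - H k by rewrite subr_ge0.
have T2 : (1 - H k) * M * S' <= (1 - H k) * M * (1 - H k).
  by apply: ler_wpM2l; [apply: mulr_ge0 => //; exact: ltW | rewrite /S'; lra].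
have T3 : (1 - H k) * ((1 - H k) * M) <= (1 - H k) * sig k by apply: ler_wpM2l.
have F : H k * (H k * sig k) <= H k * sig k.
  by apply: ler_piMl => //; apply: mulr_ge0 => //; exact: ltW.
rewrite -/(H k) expr2 -mulrA; lra.
Qed.


Definition good (sig : 'I_n -> R) k (z : 'I_n -> R) :=
  forall j, j != k -> z j = 1 -> sig j <= sig k.

Lemma key_good (sig : 'I_n -> R) k z : irreducible_mx P ->
  (forall i, 0 <= z i <= 1) -> (forall j, 0 < sig j) -> good sig k z ->
  exists y, 0 <= y < 1 /\ cost P sig k (setc z k y) <= cost P sig k (setc z k 1).
Proof.
move=> irr hz sig0 hg; rewrite cost_one.
have [[j /andP[jk /eqP zj]] | nj] := pselect (exists j, (j != k) && (z j == 1)).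
  exists 0; split; first by rewrite lexx ltr01.
  apply: caseA => //.
  - by move=> i; rewrite /setc; case: eqP => _; [rewrite lexx ler01 | exact: hz].
  - by rewrite /setc eqxx ltr01.
  - by exists j; rewrite /setc (negbTE jk).
  - move=> s; rewrite /setc; case: eqP => [_ /eqP|sk zs].
      by rewrite eq_sym oner_eq0.
    by apply: hg => //; apply/eqP.
  - by move=> i; exact: ltW.
apply: caseB => // j jk.
have /andP[_ zj1] := hz j; rewrite lt_neqAle zj1 andbT.
by apply/negP => zj; apply: nj; exists j; rewrite jk zj.
Qed.

Lemma br_val (sig : 'I_n -> R) z k u : irreducible_mx P ->
  (forall i, 0 <= z i <= 1) -> (forall j, 0 < sig j) -> 0 <= u <= 1 ->
  let B := best_resp P sig k z in
  let v := inf B + u * (sup B - inf B) in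
  0 <= v <= 1 /\ (u < 1 -> good sig k z -> v < 1).
Proof.
move=> irr hz sig0 /andP[u0 u1] B v.
have B01 b : B b -> 0 <= b <= 1 by case.
have [[b0 Bb0]|nB] := pselect (exists b, B b); last first.
  have E : B = set0 by apply/seteqP; split => x // Bx; apply: nB; exists x.
  by rewrite /v E inf0 sup0 subrr mulr0 addr0 lexx ler01 ltr01.
have hs : has_sup B by split; [exists b0 | exists 1 => x /B01 /andP[]].
have hl : has_lbound B by exists 0 => x /B01 /andP[].
have ne : B !=set0 by exists b0.
have i0 : 0 <= inf B by apply: lb_le_inf => // x /B01 /andP[].
have s1 : sup B <= 1 by apply: ge_sup => // x /B01 /andP[].
have ib b : B b -> inf B <= b by move=> Bb; apply: ge_inf.
have bs b : B b -> b <= sup B by move=> Bb; apply: sup_upper_bound.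
have is_ : inf B <= sup B by apply: le_trans (ib _ Bb0) (bs _ Bb0).
have us : u * sup B <= u by apply: ler_piMr.
have ui : u * inf B <= u * sup B by apply: ler_wpM2l.
split; first by rewrite /v; apply/andP; split; nra.
move=> ult hg.
have [y [/andP[y0 y1] hy]] := key_good irr hz sig0 hg.
have [b Bb b1] : exists2 b, B b & b < 1.
  have [B1|nB1] := pselect (B 1).
    exists y => //; split; first by apply/andP; split => //; exact: ltW.
    move=> w hw; apply: le_trans hy _; exact: B1.2 w hw.
  exists b0 => //; have /andP[_ b01] := B01 _ Bb0; rewrite lt_neqAle b01 andbT.
  by apply/eqP => e; apply: nB1; rewrite -e.
have ib1 : inf B < 1 := le_lt_trans (ib _ Bb) b1.
have h : 0 < (1 - u) * (1 - inf B) by apply: mulr_gt0; rewrite subr_gt0.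
rewrite /v; nra.
Qed.


Section Dyn.
Variables (sig : 'I_n -> R) (irr : irreducible_mx P) (sig0 : forall j, 0 < sig j).
Variables (z0 : 'I_n -> R) (kk : nat -> 'I_n) (u : nat -> R).
Hypothesis hz0 : forall i, 0 <= z0 i <= 1.
Hypothesis hu : forall t, 0 <= u t < 1.

Let Z := br_chain P sig z0 kk u.

Lemma hu01 t : 0 <= u t <= 1.
Proof. by have /andP[h1 h2] := hu t; rewrite h1 ltW. Qed.

Lemma chain_step t : Z t.+1 = setc (Z t) (kk t)
  (inf (best_resp P sig (kk t) (Z t)) + u t * (sup (best_resp P sig (kk t) (Z t))
     - inf (best_resp P sig (kk t) (Z t)))).
Proof. by []. Qed.

Lemma chain01 t i : 0 <= Z t i <= 1.
Proof.
elim: t i => [|t IH] i; first exact: hz0.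
rewrite chain_step /setc; case: eqP => _; last exact: IH.
by have [h _] := br_val (kk t) irr IH sig0 (hu01 t).
Qed.

Lemma chain_good_step t : good sig (kk t) (Z t) -> Z t.+1 (kk t) < 1.
Proof.
move=> hg; rewrite chain_step /setc eqxx.
have [_ h] := br_val (kk t) irr (chain01 t) sig0 (hu01 t).
by apply: h => //; have /andP[] := hu t.
Qed.

Lemma stay_lt1 t0 : (forall i, Z t0 i < 1) -> forall t, (t0 <= t)%N -> forall i, Z t i < 1.
Proof.
move=> H t; elim: t => [|t IH].
  by rewrite leqn0 => /eqP <-.
rewrite leq_eqVlt => /orP[/eqP <- //|]; rewrite ltnS => /IH Ht i.
rewrite /setc; case: (eqVneq i (kk t)) => [->|ik].
  apply: chain_good_step => j _ zj; have := Ht j; rewrite zj ltxx //.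
by rewrite chain_step /setc (negbTE ik); exact: Ht.
Qed.

Definition sorder := sort (fun a b => sig b <= sig a) (enum 'I_n).

Lemma sweep (a0 : 'I_n) t0 : (forall i, (i < n)%N -> kk (t0 + i) = nth a0 sorder i) ->
  forall j, Z (t0 + n) j < 1.
Proof.
move=> Hk.
have ss : sorted (fun a b => sig b <= sig a) sorder.
  by apply: sort_sorted => a b; exact: le_total.
have sz : size sorder = n by rewrite size_sort size_enum_ord.
have ins j : j \in sorder by rewrite mem_sort mem_enum.
suff inv : forall i, (i <= n)%N -> forall j, (index j sorder < i)%N -> Z (t0 + i) j < 1.
  by move=> j; apply: inv => //; move: (index_mem j sorder); rewrite ins sz => ->.
elim=> [|i IH] iln j //.
have iln' : (i < n)%N by [].
have IH' := IH (ltnW iln').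
rewrite addnS.
case: (eqVneq j (nth a0 sorder i)) => [->|ja] ji.
  rewrite -(Hk i iln'); apply: chain_good_step => l _ zl.
  have li : (i <= index l sorder)%N.
    rewrite leqNgt; apply/negP => /IH' h'; move: h'; rewrite zl ltxx //.
  rewrite Hk //.
  have tr : transitive (fun a b : 'I_n => sig b <= sig a).
    by move=> y x z h1 h2; exact: le_trans h2 h1.
  have rf : reflexive (fun a b : 'I_n => sig b <= sig a) by move=> x; exact: lexx.
  have := sorted_leq_nth tr rf a0 ss; move=> /(_ i (index l sorder)).
  have lt : (index l sorder < n)%N by move: (index_mem l sorder); rewrite ins sz.
  by rewrite !inE sz iln' nth_index // => /(_ isT lt li).
rewrite chain_step /setc Hk // (negbTE ja); apply: IH'.
rewrite ltnS leq_eqVlt in ji; case/orP: ji => // /eqP ji.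
by move: ja; rewrite -ji nth_index ?eqxx.
Qed.

End Dyn.

End Model.

Section Prob.
Variables (R : realType) (n : nat) (hn : (0 < n)%N).
Variables (d : measure_display) (Omega : measurableType d) (Pr : probability Omega R).
Variables (Z0 : Omega -> 'I_n -> R) (K : nat -> Omega -> 'I_n) (U : nat -> Omega -> R).
Hypothesis hKm : forall t k, measurable (K t @^-1` [set k]).
Hypothesis hUm : forall t, measurable_fun setT (U t).
Hypothesis hlaw : forall (N : nat) (A : 'I_n -> set R) (k : nat -> 'I_n) (C : nat -> set R),
     (forall i, measurable (A i)) -> (forall t, measurable (C t)) ->
     Pr ([set w | forall i, A i (Z0 w i)] `&`
         [set w | forall t, (t < N)%N -> K t w = k t /\ C t (U t w)])
     = (Pr [set w | forall i, A i (Z0 w i)] *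
        \big[*%E/1%E]_(t < N)
          ((n%:R^-1)%:E * lebesgue_measure (C t `&` `[0%R, 1%R]%classic)))%E.

Lemma union_bound (I : Type) (r : seq I) (F : I -> set Omega) :
  (forall i, measurable (F i)) ->
  (Pr (\big[setU/set0]_(i <- r) F i) <= \sum_(i <- r) Pr (F i))%E.
Proof.
move=> mF; elim: r => [|i r IH]; first by rewrite !big_nil measure0.
rewrite !big_cons; apply: le_trans (measureU2 _ _ _) _ => //.
  by apply: bigsetU_measurable => j _; exact: mF.
exact: leeD2l.
Qed.

Lemma in_bigU (I : eqType) (r : seq I) (F : I -> set Omega) i w :
  i \in r -> F i w -> (\big[setU/set0]_(i <- r) F i) w.
Proof.
elim: r => [//|j r IH]; rewrite inE big_cons => /orP[/eqP <- Fw|ir Fw].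
  by left.
by right; apply: IH.
Qed.

Lemma U_meas t (A : set R) : measurable A -> measurable (U t @^-1` A).
Proof. by move=> mA; rewrite -[_ @^-1` _]setTI; apply: hUm. Qed.

Lemma cyl_meas N (k : nat -> 'I_n) (C : nat -> set R) : (forall t, measurable (C t)) ->
  measurable [set w | forall t, (t < N)%N -> K t w = k t /\ C t (U t w)].
Proof.
move=> mC.
have -> : [set w | forall t, (t < N)%N -> K t w = k t /\ C t (U t w)] =
    \bigcap_(t in [set t | (t < N)%N]) (K t @^-1` [set k t] `&` U t @^-1` C t).
  by apply/seteqP; split => w /= H t /H.
apply: bigcap_measurableType => t _; apply: measurableI => //; exact: U_meas.
Qed.

Lemma cyl N (k : nat -> 'I_n) (C : nat -> set R) : (forall t, measurable (C t)) ->
  Pr [set w | forall t, (t < N)%N -> K t w = k t /\ C t (U t w)] =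
  (\big[*%E/1%E]_(t < N)
          ((n%:R^-1)%:E * lebesgue_measure (C t `&` `[0%R, 1%R]%classic)))%E.
Proof.
move=> mC; have := @hlaw N (fun _ : 'I_n => setT) k C (fun _ => measurableT) mC.
have -> : [set w | forall i, @setT R (Z0 w i)] = setT by apply/seteqP; split.
by rewrite setTI probability_setT mul1e.
Qed.

Lemma leb01 : lebesgue_measure (@setT R `&` `[0%R, 1%R]%classic) = 1%E.
Proof. by rewrite setTI lebesgue_measure_itv /= lte_fin ltr01 oppr0 adde0. Qed.


Lemma U_null t : Pr (U t @^-1` (~` `[0%R, 1%R[%classic)) = 0%E.
Proof.
set E := U t @^-1` _.
have mE : measurable E by apply: U_meas; apply: measurableC; exact: measurable_itv.
pose C s : set R := if s == t then ~` `[0%R, 1%R[%classic else setT.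
have mC s : measurable (C s).
  by rewrite /C; case: eqP => _; [apply: measurableC; exact: measurable_itv | exact: measurableT].
pose F (f : {ffun 'I_t.+1 -> 'I_n}) :=
  [set w | forall s, (s < t.+1)%N -> K s w = f (inord s) /\ C s (U s w)].
have mF f : measurable (F f) by apply: cyl_meas.
have PF f : Pr (F f) = 0%E.
  rewrite /F cyl // (bigD1 ord_max) //= /C eqxx.
  have -> : (~` `[0%R, 1%R[%classic `&` `[0%R, 1%R]%classic) = [set (1:R)].
    apply/seteqP; split => x /=.
      rewrite !in_itv /= => -[h1 /andP[h2 h3]]; apply/eqP; rewrite eq_le h3 /=.
      by rewrite leNgt; apply/negP => x1; apply: h1; rewrite h2.
    by move=> ->; rewrite !in_itv /= ler01 lexx ltxx.
  by rewrite lebesgue_measure_set1 mule0 mul0e.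
have sub : E `<=` \big[setU/set0]_(f <- index_enum {ffun 'I_t.+1 -> 'I_n}) F f.
  move=> w Ew.
  apply: (@in_bigU _ _ F [ffun s : 'I_t.+1 => K s w] w (mem_index_enum _)).
  move=> s st; rewrite ffunE inordK //; split => //.
  by rewrite /C; case: eqP => [->//|_].
apply/eqP; rewrite eq_le measure_ge0 andbT.
apply: le_trans (le_measure _ _ _ sub) _.
- by rewrite inE.
- by rewrite inE; apply: bigsetU_measurable.
apply: le_trans (union_bound _ mF) _.
by rewrite big1.
Qed.

Definition AllU := \bigcap_t (U t @^-1` `[0%R, 1%R[%classic).

Lemma AllU_meas : measurable AllU.
Proof. by apply: bigcapT_measurable => t; apply: U_meas; exact: measurable_itv. Qed.

Lemma AllU_full : Pr.-negligible (~` AllU).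
Proof.
rewrite /AllU setC_bigcap; apply: negligible_bigcup => t.
rewrite preimage_setC; apply/negligibleP; last exact: U_null.
by apply: U_meas; apply: measurableC; exact: measurable_itv.
Qed.


Variables (a0 : 'I_n) (sw : seq 'I_n).

Definition Sw b := [set w | forall i, (i < n)%N -> K (b * n + i) w = nth a0 sw i].

Lemma Sw_meas b : measurable (Sw b).
Proof.
have -> : Sw b = \bigcap_(i in [set i | (i < n)%N]) (K (b * n + i) @^-1` [set nth a0 sw i]).
  by apply/seteqP; split => w /= H i /H.
by apply: bigcap_measurableType => i _; exact: hKm.
Qed.

Definition swf : {ffun 'I_n -> 'I_n} := [ffun i : 'I_n => nth a0 sw i].
Definition kg B (g : {ffun 'I_B -> {ffun 'I_n -> 'I_n}}) (t : nat) : 'I_n :=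
  if insub (t %/ n)%N is Some b then g b (insubd a0 (t %% n)%N) else a0.
Definition Cyl B (g : {ffun 'I_B -> {ffun 'I_n -> 'I_n}}) :=
  [set w | forall t, (t < B * n)%N -> K t w = kg g t /\ @setT R (U t w)].
Definition Fg B (g : {ffun 'I_B -> {ffun 'I_n -> 'I_n}}) :=
  if [forall b, g b != swf] then Cyl g else set0.
Definition Cov B := \big[setU/set0]_(g <- index_enum {ffun 'I_B -> {ffun 'I_n -> 'I_n}}) Fg g.

Lemma Fg_meas B g : measurable (@Fg B g).
Proof.
rewrite /Fg; case: ifP => _; last exact: measurable0.
exact: (@cyl_meas (B * n)%N (kg g) (fun _ => setT) (fun _ => measurableT)).
Qed.

Lemma Cov_meas B : measurable (Cov B).
Proof. by apply: bigsetU_measurable => g _; exact: Fg_meas. Qed.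

Lemma NoSw_Cov B : [set w | forall b, (b < B)%N -> ~ Sw b w] `<=` Cov B.
Proof.
move=> w Hw.
pose g := [ffun b : 'I_B => [ffun i : 'I_n => K (b * n + i) w]].
apply: (@in_bigU _ _ (@Fg B) g w (mem_index_enum _)).
rewrite /Fg; have -> : [forall b, g b != swf].
  apply/forallP => b; apply/eqP => gb; apply: (Hw b (ltn_ord b)) => i iln.
  by have := congr1 (fun f : {ffun 'I_n -> 'I_n} => f (Ordinal iln)) gb; rewrite !ffunE.
move=> t tB; split => //.
have tb : (t %/ n < B)%N by rewrite ltn_divLR.
rewrite /kg insubT /= ffunE ffunE.
have -> : (insubd a0 (t %% n)%N : nat) = (t %% n)%N by rewrite /insubd insubT //= ltn_pmod.
by rewrite -divn_eq.
Qed.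

Lemma Cov_bound B : (Pr (Cov B) <= ((1 - (n%:R^-1) ^+ n) ^+ B)%:E)%E.
Proof.
pose c : R := n%:R^-1.
pose x := c ^+ n.
have PF g : Pr (@Fg B g) = (if [forall b, g b != swf] then c ^+ (B * n) else 0)%:E.
  rewrite /Fg; case: ifP => _; last by rewrite measure0.
  rewrite /Cyl (@cyl (B * n)%N (kg g) (fun _ => setT)); last by move=> _; exact: measurableT.
  under eq_bigr do rewrite leb01 mule1.
  by rewrite prodEFin prodr_const card_ord.
apply: le_trans (union_bound _ (@Fg_meas B)) _.
under eq_bigr do rewrite PF.
rewrite sumEFin lee_fin.
have E1 g : (if [forall b, g b != swf] then c ^+ (B * n) else 0) =
    \prod_(b : 'I_B) (if g b != swf then x else 0).
  case: ifP => [/forallP H|/negbT/forallPn[b /negPn /eqP gb]].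
    rewrite (eq_bigr (fun _ => x)); last by move=> b _; rewrite H.
    by rewrite prodr_const card_ord /x -exprM mulnC.
  by rewrite (bigD1 b) //= gb eqxx mul0r.
under eq_bigr do rewrite E1.
rewrite -(bigA_distr_bigA (fun (b : 'I_B) (h : {ffun 'I_n -> 'I_n}) => if h != swf then x else 0)).
rewrite prodr_const card_ord.
have tot : \sum_(h : {ffun 'I_n -> 'I_n}) x = 1.
  rewrite sumr_const card_ffun !card_ord -mulr_natr natrX /x -exprMn mulVf ?expr1n //.
  by rewrite pnatr_eq0 -lt0n.
have -> : \sum_(h : {ffun 'I_n -> 'I_n}) (if h != swf then x else 0) = 1 - x.
  move: tot; rewrite (bigD1 swf) //= => tot.
  rewrite (bigD1 swf) //= eqxx add0r (eq_bigr (fun _ => x)); last by move=> h ->.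
  lra.
done.
Qed.


Lemma geom_small' (x e : R) : 0 <= x < 1 -> 0 < e -> exists q, x ^+ q < e.
Proof.
move=> /andP[x0 x1] e0.
have cx : `|x| < 1 by rewrite ger0_norm.
move: (cvg_expr cx) => /cvgr_dist_lt /(_ e e0) [N _ HN].
exists N; have := HN N (leqnn N); rewrite sub0r normrN ger0_norm //.
exact: exprn_ge0.
Qed.

Lemma small_zero (x : \bar R) (g : R) : (0 <= x)%E -> 0 <= g < 1 ->
  (forall B, (x <= (g ^+ B)%:E)%E) -> x = 0%E.
Proof.
move=> x0 g01 H; have x1 := H 0%N.
case: x x0 x1 H => [r| |] //= r0 _ H.
congr (_%:E); apply/eqP; rewrite lee_fin in r0; rewrite eq_le r0 andbT.
rewrite leNgt; apply/negP => rpos.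
have [B HB] := geom_small' g01 rpos.
by have := H B; rewrite lee_fin => /(lt_le_trans HB); rewrite ltxx.
Qed.

Definition Ex := [set w | exists b, Sw b w].

Lemma Ex_full : Pr.-negligible (~` Ex).
Proof.
have sub : ~` Ex `<=` \bigcap_B Cov B.
  move=> w nE B _; apply: NoSw_Cov => b _ Sb; apply: nE; by exists b.
apply: negligibleS sub _.
have mI : measurable (\bigcap_B Cov B) by apply: bigcapT_measurable => B; exact: Cov_meas.
apply/negligibleP => //.
have c0 : 0 < (n%:R^-1 : R) ^+ n by apply: exprn_gt0; rewrite invr_gt0 ltr0n.
have c1 : (n%:R^-1 : R) ^+ n <= 1.
  by apply: exprn_ile1; [rewrite invr_ge0 ler0n | rewrite invf_le1 ?ltr0n // ler1n].
apply: (@small_zero _ (1 - (n%:R^-1) ^+ n)).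
- exact: measure_ge0.
- by apply/andP; split; lra.
move=> B; apply: le_trans (Cov_bound B).
by apply: le_measure; rewrite ?inE //; [exact: Cov_meas | move=> w /(_ B I)].
Qed.

End Prob.

Unset Implicit Arguments.

Theorem lemma3 (R : realType) (n : nat) (hn : (0 < n)%N)
  (P : 'M[R]_n) (sigma2 : 'I_n -> R)
  (hP : row_stochastic P) (hirr : irreducible_mx P) (haper : aperiodic_mx P)
  (hsig : forall j, 0 < sigma2 j)
  (d : measure_display) (Omega : measurableType d) (Pr : probability Omega R)
  (Z0 : Omega -> 'I_n -> R) (K : nat -> Omega -> 'I_n) (U : nat -> Omega -> R)
  (hZ0m : forall i, measurable_fun setT (fun w => Z0 w i))
  (hZ0 : forall w i, 0 <= Z0 w i <= 1)
  (hKm : forall t k, measurable (K t @^-1` [set k]))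
  (hUm : forall t, measurable_fun setT (U t))
  (hlaw : forall (N : nat) (A : 'I_n -> set R) (k : nat -> 'I_n) (C : nat -> set R),
     (forall i, measurable (A i)) -> (forall t, measurable (C t)) ->
     Pr ([set w | forall i, A i (Z0 w i)] `&`
         [set w | forall t, (t < N)%N -> K t w = k t /\ C t (U t w)])
     = (Pr [set w | forall i, A i (Z0 w i)] *
        \big[*%E/1%E]_(t < N)
          ((n%:R^-1)%:E * lebesgue_measure (C t `&` `[0%R, 1%R]%classic)))%E) :
  exists T : Omega -> option nat,
    (forall m, measurable (T @^-1` [set Some m])) /\
    Pr [set w | exists m, T w = Some m] = 1%E /\
    (forall w m t i, T w = Some m -> (m <= t)%N ->
       br_chain P sigma2 (Z0 w) (fun s => K s w) (fun s => U s w) t i < 1).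
Proof.
pose a0 : 'I_n := Ordinal hn.
pose sw := sorder sigma2.
pose G := AllU U `&` Ex K a0 sw.
have mEx : measurable (Ex K a0 sw).
  have -> : Ex K a0 sw = \bigcup_b Sw K a0 sw b.
    by apply/seteqP; split => w /= [b]; [move=> Sb; exists b | move=> _ Sb; exists b].
  by apply: bigcupT_measurable => b; apply: Sw_meas.
have mG : measurable G by apply: measurableI => //; exact: AllU_meas.
have exS w : G w -> exists b, `[< Sw K a0 sw b w >].
  by case=> _ [b Sb]; exists b; apply/asboolP.
pose T := fun w => match pselect (G w) with
  | left h => Some ((ex_minn (exS w h)).+1 * n)%N
  | right _ => None end.
have TG w : (exists m, T w = Some m) <-> G w.
  rewrite /T; case: pselect => h; split => //; last by case.
  by exists ((ex_minn (exS w h)).+1 * n)%N.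
have TS w m : T w = Some m <-> (G w /\ exists b, m = (b.+1 * n)%N /\ Sw K a0 sw b w /\
    (forall b', (b' < b)%N -> ~ Sw K a0 sw b' w)).
  rewrite /T; case: pselect => h; last by split => // -[].
  case: ex_minnP => b /asboolP Sb Hmin.
  split.
    case=> <-; split => //; exists b; split => //; split => // b' lt Sb'.
    by have := Hmin b' (asboolT Sb'); rewrite leqNgt lt.
  move=> [_ [b' [-> [Sb' Hmin']]]]; congr Some; congr (_ * n)%N; congr S.
  apply/eqP; rewrite eqn_leq Hmin ?(asboolT Sb') //=.
  by rewrite leqNgt; apply/negP => lt; exact: Hmin' _ lt Sb.
exists T; split.
  move=> m.
  have -> : T @^-1` [set Some m] = G `&` \bigcup_(b in [set b | m = (b.+1 * n)%N])
      (Sw K a0 sw b `&` \bigcap_(b' in [set b' | (b' < b)%N]) ~` Sw K a0 sw b').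
    apply/seteqP; split => w /=.
      move=> /TS [Gw [b [mb [Sb Hm]]]]; split => //; exists b => //; split => // b' lt.
    move=> [Gw [b mb [Sb Hm]]]; apply/TS; split => //; exists b; split => //; split => // b' lt.
  apply: measurableI => //.
  apply: bigcup_measurable => b _; apply: measurableI; first exact: Sw_meas.
  by apply: bigcap_measurableType => b' _; apply: measurableC; exact: Sw_meas.
split.
  have -> : [set w | exists m, T w = Some m] = G.
    by apply/seteqP; split => w /TG.
  have h : Pr (~` G) = 0%E.
    apply/negligibleP; first exact: measurableC.
    rewrite /G setCI; apply: negligibleU.
      exact: (AllU_full hKm hUm hlaw).
    exact: (Ex_full hn hKm hUm hlaw a0 sw).
  by have := probability_setC Pr (measurableC mG); rewrite setCK h sube0.
move=> w m t i /TS [[AU _] [b [mb [Sb _]]]] mt.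
have hz0 := hZ0 w.
have hu : forall s, 0 <= U s w < 1.
  by move=> s; have := AU s I; rewrite /= in_itv.
have sw1 : forall j, br_chain P sigma2 (Z0 w) (fun s => K s w) (fun s => U s w) (b * n + n) j < 1.
  by apply: (sweep hP hirr hsig hz0 hu (a0 := a0)) => i' iln; exact: Sb i' iln.
by apply: (stay_lt1 hP hirr hsig hz0 hu sw1); rewrite -mulSnr -mb.
Qed.
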